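(* For arbitrary probability distributions $P,Q$ on a common countable set with finite entropies, $$H\!\left(\frac{P+Q}{2}\right)-\frac{H(P)+H(Q)}{2}\ \ge\ d\!\left(\frac{1-d_{\mathrm{TV}}(P,Q)}{2}\,\Big\|\,\frac12\right),$$ and this lower bound is tight: for every $\varepsilon\in[0,1]$ there exist $P,Q$ with $d_{\mathrm{TV}}(P,Q)=\varepsilon$ attaining equality.
   Context: $H(P)=-\sum_x P(x)\log P(x)$ is the Shannon entropy; $d_{\mathrm{TV}}(P,Q)=\frac12\sum_x |P(x)-Q(x)|$; for $p,q\in[0,1]$, $d(p\|q)=p\log\frac pq+(1-p)\log\frac{1-p}{1-q}$ with $0\log0=0$. Logarithms are natural. *)

(* Defs.v *)
From Stdlib Require Import Reals Lra.
Open Scope R_scope.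

(* Probability distribution on the countable set nat (any countable set,
   finite or infinite, can be relabelled into nat, padding with zeros). *)
Definition is_distribution (P : nat -> R) : Prop :=
  (forall x, 0 <= P x) /\ infinite_sum P 1.

Definition xlogxy (x y : R) : R := if Req_EM_T x 0 then 0 else x * ln (x / y).

Definition negxlogx (x : R) : R := if Req_EM_T x 0 then 0 else - (x * ln x).

(* Shannon entropy (natural log): H(P) = h, the series converges
   (finite entropy). *)
Definition entropy_is (P : nat -> R) (h : R) : Prop :=
  infinite_sum (fun x => negxlogx (P x)) h.

Definition tv_is (P Q : nat -> R) (t : R) : Prop :=
  infinite_sum (fun x => Rabs (P x - Q x) / 2) t.

Definition bin_kl (p q : R) : R := xlogxy p q + xlogxy (1 - p) (1 - q).

Definition mixture (P Q : nat -> R) : nat -> R := fun x => (P x + Q x) / 2.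

(* Main.v *)
Require Import Defs.
From Stdlib Require Import Reals Lra Psatz.
From Coquelicot Require Import Coquelicot.
Open Scope R_scope.

Lemma ln_le_xm1 x : 0 < x -> ln x <= x - 1.
Proof. intros Hx. pose proof (exp_ineq1_le (ln x)). rewrite exp_ln in H; lra. Qed.

Definition jsf p q := negxlogx ((p+q)/2) - (negxlogx p + negxlogx q)/2.

Lemma key_ord p q t : 0 <= q <= p -> 0 <= t < 1 ->
  jsf p q >= (p/2) * ln (1+t) + (q/2) * ln (1-t).
Proof.
  intros Hq Ht. unfold jsf, negxlogx.
  destruct (Req_EM_T p 0) as [Hp0|Hp0].
  - assert (q = 0) by lra. subst. replace ((0+0)/2) with 0 by lra.
    destruct (Req_EM_T 0 0); [|lra]. lra.
  - destruct (Req_EM_T ((p+q)/2) 0) as [Hs|Hs]; [lra|].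
    assert (Hln2 : ln (1+t) <= ln 2) by (apply ln_le; lra).
    destruct (Req_EM_T q 0) as [Hq0|Hq0].
    + subst q. replace ((p+0)/2) with (p/2) by lra.
      rewrite Rdiv_def, ln_mult, ln_Rinv by lra.
      assert (p/2 * ln (1+t) <= p/2 * ln 2) by (apply Rmult_le_compat_l; lra).
      assert (0 * ln (1-t) = 0) by ring. lra.
    + assert (Hpp : 0 < p) by (destruct (Rle_lt_or_eq_dec 0 p); lra).
      assert (Hqq : 0 < q) by (destruct (Rle_lt_or_eq_dec 0 q); try lra; congruence).
      set (s := (p+q)/2).
      assert (Hs0 : 0 < s) by (unfold s; lra).
      assert (H1 : ln (s*(1+t)/p) <= s*(1+t)/p - 1) by
        (apply ln_le_xm1; apply Rdiv_lt_0_compat; nra).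
      assert (H2 : ln (s*(1-t)/q) <= s*(1-t)/q - 1) by
        (apply ln_le_xm1; apply Rdiv_lt_0_compat; nra).
      rewrite Rdiv_def, ln_mult, ln_mult, ln_Rinv in H1 by (try apply Rinv_0_lt_compat; nra).
      rewrite Rdiv_def, ln_mult, ln_mult, ln_Rinv in H2 by (try apply Rinv_0_lt_compat; nra).
      apply Rmult_le_compat_l with (r := p) in H1; [|lra].
      apply Rmult_le_compat_l with (r := q) in H2; [|lra].
      replace (p * (s * (1 + t) * / p - 1)) with (s*(1+t) - p) in H1 by (field; lra).
      replace (q * (s * (1 - t) * / q - 1)) with (s*(1-t) - q) in H2 by (field; lra).
      unfold s in *. nra.
Qed.

Lemma negxlogx_0 : negxlogx 0 = 0.
Proof. unfold negxlogx. destruct (Req_EM_T 0 0); lra. Qed.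

Lemma negxlogx_nz x : x <> 0 -> negxlogx x = - (x * ln x).
Proof. intros. unfold negxlogx. destruct (Req_EM_T x 0); lra. Qed.

Lemma jsf_sym p q : jsf p q = jsf q p.
Proof. unfold jsf. replace (q+p) with (p+q) by ring. field. Qed.

Lemma key p q t : 0 <= p -> 0 <= q -> 0 <= t < 1 ->
  jsf p q >= ((p+q)/2 + Rabs (p-q)/2)/2 * ln (1+t) + ((p+q)/2 - Rabs (p-q)/2)/2 * ln (1-t).
Proof.
  intros Hp Hq Ht. unfold Rabs; destruct (Rcase_abs (p-q)).
  - rewrite jsf_sym. replace ((p + q) / 2 + - (p - q) / 2) with q by field.
    replace ((p + q) / 2 - - (p - q) / 2) with p by field.
    apply key_ord; lra.
  - replace ((p + q) / 2 + (p - q) / 2) with p by field.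
    replace ((p + q) / 2 - (p - q) / 2) with q by field.
    apply key_ord; lra.
Qed.

Lemma jsf_ge0 p q : 0 <= p -> 0 <= q -> 0 <= jsf p q.
Proof.
  intros. pose proof (key p q 0 H H0 ltac:(lra)).
  rewrite Rplus_0_r, Rminus_0_r, ln_1 in H1. lra.
Qed.

Lemma upper_ord p q : 0 <= q <= p -> jsf p q <= (p+q)/2 * ln 2.
Proof.
  intros Hq. unfold jsf, negxlogx.
  destruct (Req_EM_T p 0) as [Hp0|Hp0].
  - assert (q = 0) by lra. subst. replace ((0+0)/2) with 0 by lra.
    destruct (Req_EM_T 0 0); [|lra]. lra.
  - destruct (Req_EM_T ((p+q)/2) 0) as [Hs|Hs]; [lra|].
    destruct (Req_EM_T q 0) as [Hq0|Hq0].
    + subst q. replace ((p+0)/2) with (p/2) by lra.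
      rewrite Rdiv_def, ln_mult, ln_Rinv by lra. lra.
    + assert (Hpp : 0 < p) by (destruct (Rle_lt_or_eq_dec 0 p); lra).
      assert (Hqq : 0 < q) by (destruct (Rle_lt_or_eq_dec 0 q); try lra; congruence).
      set (s := (p+q)/2).
      assert (Hs0 : 0 < s) by (unfold s; lra).
      assert (H1 : ln (p/s) <= ln 2) by (apply ln_le; [apply Rdiv_lt_0_compat; lra|
        apply Rmult_le_reg_r with s; [lra|]; unfold Rdiv; rewrite Rmult_assoc, Rinv_l by lra; unfold s; lra]).
      assert (H2 : ln (q/s) <= ln 2) by (apply ln_le; [apply Rdiv_lt_0_compat; lra|
        apply Rmult_le_reg_r with s; [lra|]; unfold Rdiv; rewrite Rmult_assoc, Rinv_l by lra; unfold s; lra]).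
      rewrite Rdiv_def, ln_mult, ln_Rinv in H1, H2 by (try apply Rinv_0_lt_compat; lra).
      apply Rmult_le_compat_l with (r := p) in H1; [|lra].
      apply Rmult_le_compat_l with (r := q) in H2; [|lra].
      unfold s in *. nra.
Qed.

Lemma upper p q : 0 <= p -> 0 <= q -> jsf p q <= (p+q)/2 * ln 2.
Proof.
  intros. destruct (Rle_dec q p). apply upper_ord; lra.
  rewrite jsf_sym, Rplus_comm. apply upper_ord; lra.
Qed.

Lemma t1case p q : 0 <= p -> 0 <= q -> (p+q)/2 - Rabs (p-q)/2 = 0 ->
  jsf p q = ((p+q)/2 + Rabs (p-q)/2)/2 * ln 2.
Proof.
  intros Hp Hq. unfold Rabs; destruct (Rcase_abs (p-q)); intros E.
  - assert (p = 0) by lra. subst. unfold jsf, negxlogx.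
    replace ((0+q)/2) with (q/2) by lra.
    destruct (Req_EM_T 0 0); [|lra].
    destruct (Req_EM_T (q/2) 0); destruct (Req_EM_T q 0); try lra.
    assert (0 < q) by (destruct (Rle_lt_or_eq_dec 0 q); try lra; congruence).
    rewrite Rdiv_def, ln_mult, ln_Rinv by lra. field.
  - assert (q = 0) by lra. subst. unfold jsf.
    replace ((p+0)/2) with (p/2) by lra. rewrite negxlogx_0.
    destruct (Rle_lt_or_eq_dec 0 p Hp) as [Hp'|Hp'].
    + rewrite !negxlogx_nz by lra.
      rewrite Rdiv_def, ln_mult, ln_Rinv by lra. field.
    + subst p. replace (0/2) with 0 by lra. rewrite negxlogx_0.
      replace ((0 + (0 - 0) / 2) / 2) with 0 by field. field.
Qed.

Lemma ex_le_pos (a b : nat -> R) : (forall n, 0 <= a n <= b n) -> ex_series b -> ex_series a.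
Proof.
  intros H Hb. apply (ex_series_le a b); auto.
  intros n. specialize (H n). change (norm (a n)) with (Rabs (a n)).
  rewrite Rabs_pos_eq; lra.
Qed.

Lemma Series_0 : Series (fun _ => 0) = 0.
Proof.
  rewrite (Series_ext (fun _ => 0) (fun n => 0 * 0)) by (intros; ring).
  rewrite Series_scal_l. ring.
Qed.

Lemma Series_le_gen (a b : nat -> R) : ex_series a -> ex_series b ->
  (forall n, a n <= b n) -> Series a <= Series b.
Proof.
  intros Ha Hb H.
  assert (Series (fun _ => 0) <= Series (fun n => b n - a n)).
  { apply Series_le. intros n; specialize (H n); lra.
    apply (ex_series_minus b a Hb Ha). }
  rewrite Series_0, Series_minus in H0 by auto. lra.
Qed.

Lemma sum_ge_term (a : nat -> R) n : (forall k, 0 <= a k) -> a n <= sum_f_R0 a n.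
Proof.
  intros H. destruct n; simpl. lra.
  pose proof (cond_pos_sum a n H). lra.
Qed.

Lemma nonneg_zero (a : nat -> R) : (forall n, 0 <= a n) -> ex_series a -> Series a = 0 ->
  forall n, a n = 0.
Proof.
  intros H Hex H0 n.
  pose proof (Series_incr_n a (S n) ltac:(lia) Hex) as E. simpl in E.
  assert (0 <= Series (fun k => a (S n + k)%nat)).
  { rewrite <- Series_0. apply Series_le. intros; split; [lra|apply H].
    apply (ex_series_incr_n a (S n)); auto. }
  simpl in H1. pose proof (sum_ge_term a n H). specialize (H n). lra.
Qed.

Lemma ser_of (a : nat -> R) l : infinite_sum a l -> ex_series a /\ Series a = l.
Proof.
  intros H. apply is_series_Reals in H. split. exists l; auto.
  apply is_series_unique; auto.
Qed.

Lemma inf_of (a : nat -> R) : ex_series a -> infinite_sum a (Series a).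
Proof. intros H. apply is_series_Reals. apply Series_correct; auto. Qed.

Lemma ex_ext (a b : nat -> R) : (forall n, a n = b n) -> ex_series a -> ex_series b.
Proof. intros. apply (ex_series_ext a b); auto. Qed.

Lemma ex_plus (a b : nat -> R) : ex_series a -> ex_series b -> ex_series (fun n => a n + b n).
Proof. intros. apply (ex_series_plus a b); auto. Qed.

Lemma ex_minus (a b : nat -> R) : ex_series a -> ex_series b -> ex_series (fun n => a n - b n).
Proof. intros. apply (ex_series_minus a b); auto. Qed.

Lemma ex_scal (c : R) (a : nat -> R) : ex_series a -> ex_series (fun n => a n * c).
Proof. intros. apply ex_series_scal_r; auto. Qed.

Lemma part1 : forall (P Q : nat -> R) (hP hQ : R),
      is_distribution P -> is_distribution Q ->
      entropy_is P hP -> entropy_is Q hQ ->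
      exists hM t,
        entropy_is (mixture P Q) hM /\ tv_is P Q t /\
        hM - (hP + hQ) / 2 >= bin_kl ((1 - t) / 2) (1 / 2).
Proof.
  intros P Q hP hQ [P0 P1] [Q0 Q1] HP HQ.
  apply ser_of in P1 as [exP SP]. apply ser_of in Q1 as [exQ SQ].
  apply ser_of in HP as [exHP SHP]. apply ser_of in HQ as [exHQ SHQ].
  set (s := fun n => (P n + Q n) / 2).
  set (d := fun n => Rabs (P n - Q n) / 2).
  assert (exs : ex_series s).
  { apply (ex_ext (fun n => (P n + Q n) * / 2) s).
    intros; unfold s; field. apply ex_scal, ex_plus; auto. }
  assert (Ss : Series s = 1).
  { rewrite (Series_ext s (fun n => (P n + Q n) * / 2)) by (intros; unfold s; field).
    rewrite Series_scal_r, Series_plus by auto. rewrite SP, SQ. field. }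
  assert (dle : forall n, 0 <= d n <= s n).
  { intros n. unfold d, s. specialize (P0 n). specialize (Q0 n).
    unfold Rabs; destruct (Rcase_abs (P n - Q n)); lra. }
  assert (exd : ex_series d) by (apply (ex_le_pos d s); auto).
  set (t := Series d).
  assert (t1 : t <= 1) by (rewrite <- Ss; apply Series_le; auto).
  assert (t0 : 0 <= t).
  { unfold t. rewrite <- Series_0. apply Series_le; auto. intros n; specialize (dle n); lra. }
  set (J := fun n => jsf (P n) (Q n)).
  assert (exJ : ex_series J).
  { apply (ex_le_pos J (fun n => s n * ln 2)). intros n; unfold J, s; split.
    apply jsf_ge0; auto. apply upper; auto. apply ex_scal; auto. }
  set (M := fun n => negxlogx (mixture P Q n)).
  assert (ME : forall n, M n = J n + (negxlogx (P n) + negxlogx (Q n)) * / 2).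
  { intros n. unfold M, J, jsf, mixture. field. }
  assert (exM : ex_series M).
  { apply (ex_ext (fun n => J n + (negxlogx (P n) + negxlogx (Q n)) * / 2) M).
    intros; rewrite ME; auto. apply ex_plus; auto. apply ex_scal, ex_plus; auto. }
  assert (SM : Series M = Series J + (hP + hQ) / 2).
  { rewrite (Series_ext M _ ME). rewrite Series_plus by (auto; apply ex_scal, ex_plus; auto).
    rewrite Series_scal_r, Series_plus by auto. rewrite SHP, SHQ. field. }
  exists (Series M), t. split; [apply inf_of; auto|]. split; [apply inf_of; auto|].
  rewrite SM. replace (Series J + (hP + hQ) / 2 - (hP + hQ) / 2) with (Series J) by field.
  destruct (Rle_lt_or_eq_dec t 1 t1) as [tl1|te1].
  - set (g := fun n => (s n + d n) * (ln (1+t) / 2) + (s n - d n) * (ln (1-t) / 2)).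
    assert (exg : ex_series g).
    { apply ex_plus; apply ex_scal; [apply ex_plus|apply ex_minus]; auto. }
    assert (Sg : Series g = (1 + t) / 2 * ln (1 + t) + (1 - t) / 2 * ln (1 - t)).
    { unfold g. rewrite Series_plus by (apply ex_scal; first [apply ex_minus; auto; fail | apply ex_plus]; auto).
      rewrite !Series_scal_r, Series_plus, Series_minus by auto. fold t. rewrite Ss. field. }
    assert (Series g <= Series J).
    { apply Series_le_gen; auto. intros n. unfold g, J.
      pose proof (key (P n) (Q n) t (P0 n) (Q0 n) ltac:(lra)). unfold s, d. lra. }
    unfold bin_kl, xlogxy.
    destruct (Req_EM_T ((1 - t) / 2) 0) as [e|_]; [lra|].
    destruct (Req_EM_T (1 - (1 - t) / 2) 0) as [e|_]; [lra|].
    replace ((1 - t) / 2 / (1 / 2)) with (1 - t) by field.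
    replace ((1 - (1 - t) / 2) / (1 - 1 / 2)) with (1 + t) by field.
    replace (1 - (1 - t) / 2) with ((1 + t) / 2) by field. lra.
  - assert (ez : forall n, s n - d n = 0).
    { apply nonneg_zero. intros n; specialize (dle n); lra. apply ex_minus; auto.
      rewrite Series_minus by auto. fold t. lra. }
    assert (SJ : Series J = ln 2).
    { rewrite (Series_ext J (fun n => (s n + d n) * (ln 2 / 2))).
      rewrite Series_scal_r, Series_plus by auto. fold t. rewrite Ss, te1. field.
      intros n. unfold J. rewrite t1case; auto. unfold s, d. field. apply (ez n). }
    rewrite SJ, te1. unfold bin_kl, xlogxy.
    replace ((1 - 1) / 2) with 0 by field.
    destruct (Req_EM_T 0 0) as [_|e]; [|lra].
    replace (1 - 0) with 1 by ring.
    destruct (Req_EM_T 1 0) as [e|_]; [lra|].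
    replace (1 / (1 - 1 / 2)) with 2 by field. lra.
Qed.

Lemma two_terms (a : nat -> R) l : (forall n, (2 <= n)%nat -> a n = 0) -> a 0%nat + a 1%nat = l ->
  infinite_sum a l.
Proof.
  intros H E eps He. exists 1%nat. intros n Hn.
  assert (sum_f_R0 a n = l).
  { induction n. lia. destruct n. simpl. lra.
    simpl. simpl in IHn. rewrite IHn by lia. rewrite H by lia. ring. }
  rewrite H0. unfold R_dist. rewrite Rminus_diag, Rabs_R0. lra.
Qed.

Lemma xlogxy_half a : 0 <= a -> xlogxy a (1/2) = a * ln 2 - negxlogx a.
Proof.
  intros Ha. unfold xlogxy. destruct (Req_EM_T a 0).
  - subst. rewrite negxlogx_0. ring.
  - rewrite negxlogx_nz by auto.
    replace (a / (1/2)) with (2 * a) by field.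
    rewrite ln_mult by (destruct (Rle_lt_or_eq_dec 0 a Ha); lra). ring.
Qed.

Lemma negxlogx_half : negxlogx (1/2) = 1/2 * ln 2.
Proof.
  rewrite negxlogx_nz by lra. rewrite Rdiv_def, Rmult_1_l, ln_Rinv by lra. field.
Qed.

Definition Pe (e : R) (n : nat) : R :=
  match n with 0%nat => (1+e)/2 | 1%nat => (1-e)/2 | _ => 0 end.
Definition Qe (e : R) (n : nat) : R :=
  match n with 0%nat => (1-e)/2 | 1%nat => (1+e)/2 | _ => 0 end.

Lemma part2 : forall eps : R, 0 <= eps <= 1 ->
      exists (P Q : nat -> R) (hP hQ hM : R),
        is_distribution P /\ is_distribution Q /\
        entropy_is P hP /\ entropy_is Q hQ /\
        entropy_is (mixture P Q) hM /\ tv_is P Q eps /\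
        hM - (hP + hQ) / 2 = bin_kl ((1 - eps) / 2) (1 / 2).
Proof.
  intros e He.
  exists (Pe e), (Qe e), (negxlogx ((1+e)/2) + negxlogx ((1-e)/2)),
    (negxlogx ((1-e)/2) + negxlogx ((1+e)/2)), (negxlogx (1/2) + negxlogx (1/2)).
  assert (big : forall n, (2 <= n)%nat -> Pe e n = 0 /\ Qe e n = 0).
  { intros n Hn. destruct n as [|[|n]]; try lia. simpl. auto. }
  repeat split.
  - intros [|[|n]]; simpl; lra.
  - apply two_terms. intros n Hn; apply big; auto. simpl; field.
  - intros [|[|n]]; simpl; lra.
  - apply two_terms. intros n Hn; apply big; auto. simpl; field.
  - apply two_terms. intros n Hn; cbv beta; destruct (big n Hn) as [-> _]; apply negxlogx_0. reflexivity.
  - apply two_terms. intros n Hn; cbv beta; destruct (big n Hn) as [_ ->]; apply negxlogx_0. reflexivity.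
  - apply two_terms. intros n Hn; cbv beta; unfold mixture; destruct (big n Hn) as [-> ->].
    replace ((0+0)/2) with 0 by field. apply negxlogx_0.
    unfold mixture; simpl. replace (((1 + e) / 2 + (1 - e) / 2) / 2) with (1/2) by field.
    replace (((1 - e) / 2 + (1 + e) / 2) / 2) with (1/2) by field. reflexivity.
  - apply two_terms. intros n Hn; cbv beta; destruct (big n Hn) as [-> ->].
    replace (0 - 0) with 0 by ring. rewrite Rabs_R0. field.
    simpl. replace ((1 + e) / 2 - (1 - e) / 2) with e by field.
    replace ((1 - e) / 2 - (1 + e) / 2) with (- e) by field.
    rewrite Rabs_Ropp, Rabs_pos_eq by lra. field.
  - unfold bin_kl. replace (1 - (1 - e) / 2) with ((1 + e) / 2) by field.
    replace (1 - 1/2) with (1/2) by field.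
    rewrite !xlogxy_half by lra. rewrite negxlogx_half. field.
Qed.

Theorem corollary2 :
  (forall (P Q : nat -> R) (hP hQ : R),
      is_distribution P -> is_distribution Q ->
      entropy_is P hP -> entropy_is Q hQ ->
      exists hM t,
        entropy_is (mixture P Q) hM /\ tv_is P Q t /\
        hM - (hP + hQ) / 2 >= bin_kl ((1 - t) / 2) (1 / 2))
  /\
  (forall eps : R, 0 <= eps <= 1 ->
      exists (P Q : nat -> R) (hP hQ hM : R),
        is_distribution P /\ is_distribution Q /\
        entropy_is P hP /\ entropy_is Q hQ /\
        entropy_is (mixture P Q) hM /\ tv_is P Q eps /\
        hM - (hP + hQ) / 2 = bin_kl ((1 - eps) / 2) (1 / 2)).
Proof. split. exact part1. exact part2. Qed.
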